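(* Algorithm 1, when run on an $n$-dimensional unique sink orientation $\psi$ with starting vertex $v^0 \in Q^n$, needs at most $O(\alpha^\rho)$ vertex evaluations, where $\rho = |r_\psi(v^0)|$ and $1<\alpha < \phi$ is the constant in the running time bound of the Fibonacci Seesaw algorithm ($\phi$ the golden ratio).
   Context: Let $Q^n = 2^{[n]}$ be the vertex set of the $n$-cube, with $u,v$ adjacent iff $|u\oplus v|=1$; faces are $F_{J,v}=\{u : v\oplus u\subseteq J\}$ for $J\subseteq[n]$, of dimension $|J|$. A unique sink orientation (USO) is an orientation of the cube's edges such that every nonempty face has a unique sink (vertex with no outgoing edges within the face). The outmap $s_\psi(v)$ is the set of coordinates $j$ such that the edge $\{v,v\oplus\{j\}\}$ is directed away from $v$. The reachmap is $r_\psi(v)=s_\psi(v)\cup\{j : \exists u \text{ reachable from } v \text{ by a directed path with } j\in s_\psi(u)\}$. A vertex evaluation is an oracle query returning $s_\psi(v)$ for a given $v$. The Fibonacci Seesaw algorithm (Szabó and Welzl) finds the sink of any $k$-dimensional USO (in particular of any $k$-face of $\psi$) using $O(\alpha^k)$ vertex evaluations, for a constant $1<\alpha<\phi=(1+\sqrt5)/2$. Algorithm 1: given a starting vertex $v^0$, set $E^0=\emptyset$ and $j=0$; while $s_\psi(v^j)\neq\emptyset$: pick any $b\in s_\psi(v^j)$, let $v^{j+1}$ be the sink of the face $F_{E^j, v^j\oplus\{b\}}$ computed by the Fibonacci Seesaw algorithm, set $E^{j+1}=E^j\cup\{b\}$ and $j\leftarrow j+1$; it stops when $s_\psi(v^j)=\emptyset$.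 *)

(* Defs.v *)
From mathcomp Require Import all_boot.
From Stdlib Require Import Reals.

Set Implicit Arguments.
Unset Strict Implicit.
Unset Printing Implicit Defensive.

(* Vertices of Q^n are subsets of [n] = 'I_n. *)
Notation vertex n := {set 'I_n}.

Definition symdiff (n : nat) (u v : vertex n) : vertex n := (u :\: v) :|: (v :\: u).

(* An orientation of the cube's edges, represented by its outmap s:
   j \in s v  iff the edge {v, v (+) {j}} is directed away from v.
   Consistency: every edge has exactly one direction. *)
Definition is_orientation (n : nat) (s : vertex n -> vertex n) : Prop :=
  forall (v : vertex n) (j : 'I_n), (j \in s v) = (j \notin s (symdiff v [set j])).

Definition in_face (n : nat) (J v u : vertex n) : bool := symdiff v u \subset J.

(* u is a sink of the face F_{J,v}: u lies in it and has no outgoing edge inside it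
   (the edges of the face at u are exactly those in the coordinates of J). *)
Definition is_face_sink (n : nat) (s : vertex n -> vertex n) (J v u : vertex n) : bool :=
  in_face J v u && (s u :&: J == set0).

Definition is_uso (n : nat) (s : vertex n -> vertex n) : Prop :=
  is_orientation s /\
  forall J v : vertex n, #|[set u | is_face_sink s J v u]| = 1%N.

Definition dedge (n : nat) (s : vertex n -> vertex n) : rel (vertex n) :=
  fun u w => [exists j : 'I_n, (j \in s u) && (w == symdiff u [set j])].

Definition reachmap (n : nat) (s : vertex n -> vertex n) (v : vertex n) : vertex n :=
  s v :|: [set j | [exists u, connect (dedge s) v u && (j \in s u)]].

(* Oracle (query) programs: the only access to the orientation is a vertex
   evaluation, i.e. asking for s(v) for a vertex v. *)
Inductive oprog (n : nat) (A : Type) : Type :=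
| ORet : A -> oprog n A
| OAsk : vertex n -> (vertex n -> oprog n A) -> oprog n A.

Fixpoint orun (n : nat) (A : Type) (s : vertex n -> vertex n) (p : oprog n A) : A * nat :=
  match p with
  | ORet a => (a, 0%N)
  | OAsk v k => let r := orun s (k (s v)) in (r.1, r.2.+1)
  end.

(* A face-sink-finding subroutine (in the theorem: the Fibonacci Seesaw algorithm),
   given for each dimension n and face (J, v) as an oracle program. *)
Definition sink_finder_type := forall n : nat, vertex n -> vertex n -> oprog n (vertex n).

Definition sink_finder_spec (c alpha : R) (FS : sink_finder_type) : Prop :=
  forall (n : nat) (s : vertex n -> vertex n), is_uso s ->
  forall J v : vertex n,
    is_face_sink s J v (orun s (FS n J v)).1 /\
    (INR (orun s (FS n J v)).2 <= c * alpha ^ #|J|)%R.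

(* A (possibly partial) run of Algorithm 1 performing m iterations from v0:
   vs j = v^j, Es j = E^j, Bs j = {b_j} with b_j an arbitrary element of s(v^j)
   (the algorithm may pick any b; all choices are covered). *)
Definition alg1_run (n : nat) (s : vertex n -> vertex n) (FS : sink_finder_type)
    (v0 : vertex n) (m : nat) (vs Es Bs : nat -> vertex n) : Prop :=
  vs 0%N = v0 /\ Es 0%N = set0 /\
  forall j : nat, (j < m)%N ->
    [/\ s (vs j) != set0,
        exists2 b : 'I_n, b \in s (vs j) & Bs j = [set b],
        vs j.+1 = (orun s (FS n (Es j) (symdiff (vs j) (Bs j)))).1
      & Es j.+1 = Es j :|: Bs j].

(* Vertex evaluations used by the first m iterations: one evaluation of s(v^j)
   for each j <= m (loop tests) plus the evaluations of each subroutine call. *)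
Definition alg1_cost (n : nat) (s : vertex n -> vertex n) (FS : sink_finder_type)
    (m : nat) (vs Es Bs : nat -> vertex n) : nat :=
  (m.+1 + \sum_(j < m) (orun s (FS n (Es j) (symdiff (vs j) (Bs j)))).2)%N.

Definition golden_ratio : R := ((1 + sqrt 5) / 2)%R.

(* Main.v *)
Require Import Defs.
From mathcomp Require Import all_boot.
From Stdlib Require Import Reals Lra.

Set Implicit Arguments.
Unset Strict Implicit.
Unset Printing Implicit Defensive.

Section Cube.
Import all_boot.
Variable n : nat.
Implicit Types (u v w x J K : vertex n).

Lemma in_symdiff u v i : (i \in symdiff u v) = ((i \in u) != (i \in v)).
Proof. rewrite /symdiff !inE; by case: (i \in u); case: (i \in v). Qed.

Lemma in_faceP J v u :
  reflect (forall i, i \notin J -> (i \in v) = (i \in u)) (in_face J v u).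
Proof.
apply: (iffP subsetP) => H i.
- move=> iJ; apply/eqP; apply: contraNT iJ => ne; apply: H; by rewrite in_symdiff.
- rewrite in_symdiff => iS; apply: contraNT iS => iJ; by rewrite H.
Qed.

Lemma face_refl J v : in_face J v v.
Proof. by apply/in_faceP. Qed.

Lemma face_sym J v u : in_face J v u -> in_face J u v.
Proof. move=> /in_faceP H; apply/in_faceP => i iJ; by rewrite H. Qed.

Lemma face_trans J v u w : in_face J v u -> in_face J u w -> in_face J v w.
Proof.
move=> /in_faceP H1 /in_faceP H2; apply/in_faceP => i iJ; by rewrite H1 // H2.
Qed.

Lemma face_sub J K v u : J \subset K -> in_face J v u -> in_face K v u.
Proof. move=> sJK H; exact: subset_trans H sJK. Qed.

Lemma face_flip J v b : b \in J -> in_face J v (symdiff v [set b]).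
Proof.
move=> bJ; apply/in_faceP => i iJ; rewrite in_symdiff in_set1.
have -> : (i == b) = false by apply/negP => /eqP E; rewrite E bJ in iJ.
by case: (i \in v).
Qed.

Lemma face_split1 b J v w : in_face (b |: J) v w -> (b \in v) = (b \in w) ->
  in_face J v w.
Proof.
move=> /in_faceP H Hb; apply/in_faceP => i iJ.
case: (eqVneq i b) => [->//|ne]; apply: H; by rewrite !inE negb_or ne.
Qed.

Lemma face_split2 b J v w : in_face (b |: J) v w -> (b \in v) != (b \in w) ->
  in_face J (symdiff v [set b]) w.
Proof.
move=> /in_faceP H Hb; apply/in_faceP => i iJ; rewrite in_symdiff in_set1.
case: (eqVneq i b) => [->|ne].
  by move: Hb; case: (b \in v); case: (b \in w).
have iJ' : i \notin b |: J by rewrite !inE negb_or ne.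
rewrite (H i iJ'); by case: (i \in w).
Qed.

Variable s : vertex n -> vertex n.
Hypothesis Hs : is_uso s.

Lemma sink_uniq J v u1 u2 : is_face_sink s J v u1 -> is_face_sink s J v u2 -> u1 = u2.
Proof.
case: Hs => _ /(_ J v) /eqP /cards1P [x Hx] H1 H2.
have : u1 \in [set u | is_face_sink s J v u] by rewrite inE.
have : u2 \in [set u | is_face_sink s J v u] by rewrite inE.
by rewrite Hx !inE => /eqP -> /eqP ->.
Qed.

Lemma sink_ex J v : exists u, is_face_sink s J v u.
Proof.
case: Hs => _ /(_ J v) /eqP /cards1P [x Hx]; exists x.
have : x \in [set u | is_face_sink s J v u] by rewrite Hx set11.
by rewrite inE.
Qed.

Lemma sink_move J v v' u : is_face_sink s J v u -> in_face J v v' -> is_face_sink s J v' u.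
Proof.
case/andP => H1 H2 H3; rewrite /is_face_sink H2 andbT.
exact: face_trans (face_sym H3) H1.
Qed.

Lemma sink_sub J K v u : is_face_sink s J v u -> K \subset J -> in_face K v u ->
  is_face_sink s K v u.
Proof.
case/andP => _ H2 sKJ Hf; rewrite /is_face_sink Hf /= -subset0 -(eqP H2).
exact: setIS.
Qed.

Lemma sink_contra J v w b : is_face_sink s J v w -> b \in J -> b \in s w -> False.
Proof.
case/andP => _ /eqP H bJ bs.
have : b \in s w :&: J by rewrite inE bs.
by rewrite H inE.
Qed.

Lemma step_sink J v b w : s v :&: J == set0 -> b \in s v ->
  is_face_sink s J (symdiff v [set b]) w -> is_face_sink s (b |: J) v w.
Proof.
move=> Hv bv Hw.
have [u Hu] := sink_ex (b |: J) v.
have Hf : in_face (b |: J) v u by case/andP: Hu.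
case: (boolP ((b \in v) == (b \in u))) => [/eqP E|ne].
  have Hu' : is_face_sink s J v u.
    apply: sink_sub Hu _ (face_split1 Hf E); exact: subsetUr.
  have Hv' : is_face_sink s J v v by rewrite /is_face_sink face_refl.
  have E' := sink_uniq Hu' Hv'; rewrite E' in Hu.
  by case: (sink_contra Hu (setU11 b J) bv).
have Hu' : is_face_sink s J (symdiff v [set b]) u.
  apply: (sink_sub (sink_move Hu (face_flip v (setU11 b J))) _ (face_split2 Hf ne)); exact: subsetUr.
by rewrite (sink_uniq Hw Hu').
Qed.

Lemma reach_sink k : forall J u w, #|J| = k -> is_face_sink s J u w ->
  connect (dedge s) u w.
Proof.
elim: k => [|k IH] J u w HJ Hw.
  move: HJ => /eqP; rewrite cards_eq0 => /eqP HJ0.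
  case/andP: Hw => /in_faceP Hf _.
  have -> : u = w by apply/setP => i; apply: Hf; rewrite HJ0 inE.
  exact: connect0.
have : (0 < #|J|)%N by rewrite HJ.
case/card_gt0P => b bJ.
set J' := J :\ b.
have HJ' : #|J'| = k by move: HJ; rewrite (cardsD1 b J) bJ add1n => -[].
have EJ : J = b |: J' by rewrite setD1K.
have sJ' : J' \subset J by exact: subD1set.
have [u' Hu'] := sink_ex J' u.
have Cuu' := IH _ _ _ HJ' Hu'.
have Hfu' : in_face J u u' by case/andP: Hu' => H _; exact: face_sub sJ' H.
case: (boolP (b \in s u')) => bs; last first.
  suff Hu'J : is_face_sink s J u u' by rewrite (sink_uniq Hw Hu'J).
  rewrite /is_face_sink Hfu' /=; case/andP: Hu' => _ /eqP H.
  rewrite -subset0; apply/subsetP => i; rewrite inE => /andP [iS iJ].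
  case: (eqVneq i b) => [E|ne]; first by rewrite -E iS in bs.
  have : i \in s u' :&: J' by rewrite !inE ne iS iJ.
  by rewrite H.
set x := symdiff u' [set b].
have Hedge : dedge s u' x by apply/existsP; exists b; rewrite bs eqxx.
have [x' Hx'] := sink_ex J' x.
have Cxx' := IH _ _ _ HJ' Hx'.
have Hwu' : is_face_sink s J u' w by exact: sink_move Hw Hfu'.
have Hf : in_face (b |: J') u' w by rewrite -EJ; case/andP: Hwu'.
case: (boolP ((b \in u') == (b \in w))) => [/eqP E|ne].
  have Hw' : is_face_sink s J' u' w by apply: sink_sub Hwu' sJ' (face_split1 Hf E).
  have Hu'' : is_face_sink s J' u' u'.
    by rewrite /is_face_sink face_refl; case/andP: Hu'.
  have E' := sink_uniq Hw' Hu''; rewrite E' in Hw.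
  by case: (sink_contra Hw bJ bs).
have Hw' : is_face_sink s J' x w.
  exact: (sink_sub (sink_move Hwu' (face_flip u' bJ)) sJ' (face_split2 Hf ne)).
rewrite (sink_uniq Hw' Hx').
apply: connect_trans Cuu' _; apply: connect_trans (connect1 Hedge) Cxx'.
Qed.

End Cube.

Section Main.
Import all_boot.
Lemma INR_addn a b : INR (a + b)%N = Rplus (INR a) (INR b).
Proof. exact: plus_INR. Qed.
Lemma main_bound (alpha c : R) (FS : sink_finder_type)
  (Ha1 : Rlt 1 alpha) (HFS : sink_finder_spec c alpha FS) :
  exists C : R,
    forall (n : nat) (s : {set 'I_n} -> {set 'I_n}), is_uso s ->
    forall (v0 : {set 'I_n}) (m : nat) (vs Es Bs : nat -> {set 'I_n}),
      alg1_run s FS v0 m vs Es Bs ->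
      Rle (INR (alg1_cost s FS m vs Es Bs)) (Rmult C (pow alpha #|reachmap s v0|)).
Proof.
exists (Rdiv (Rmult (Rplus 1 (Rabs c)) alpha) (Rminus alpha 1)).
move=> n s Hs v0 m vs Es Bs [H0 [HE0 Hrun]].
set Rm := reachmap s v0.
have inv : forall j, (j <= m)%N -> [/\ s (vs j) :&: Es j == set0, #|Es j| = j,
     Es j \subset Rm & connect (dedge s) v0 (vs j)].
  elim=> [|j IH] Hj.
    by rewrite HE0 H0 cards0 setI0 sub0set connect0.
  have [Hsne [b Hb HB] Hv HEs] := Hrun j Hj.
  have [I1 I2 I3 I4] := IH (ltnW Hj).
  have [Hsink _] := HFS n s Hs (Es j) (symdiff (vs j) (Bs j)).
  rewrite -Hv HB in Hsink.
  have bnE : b \notin Es j.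
    apply/negP => bE; have : b \in s (vs j) :&: Es j by rewrite inE Hb.
    by rewrite (eqP I1) inE.
  have EE : Es j.+1 = b |: Es j by rewrite HEs HB setUC.
  have St := step_sink Hs I1 Hb Hsink.
  rewrite EE; split.
  - by case/andP: St.
  - by rewrite cardsU1 bnE I2.
  - rewrite subUset sub1set I3 andbT /Rm /reachmap inE; apply/orP; right.
    rewrite inE; apply/existsP; exists (vs j); by rewrite I4 Hb.
  - apply: connect_trans I4 _.
    have Hedge : dedge s (vs j) (symdiff (vs j) [set b]).
      by apply/existsP; exists b; rewrite Hb eqxx.
    apply: connect_trans (connect1 Hedge) _.
    exact: (reach_sink Hs (erefl _) Hsink).
set cost := fun j => (orun s (FS n (Es j) (symdiff (vs j) (Bs j)))).2.
have Hcost : forall j, (j < m)%N -> Rle (INR (cost j)) (Rmult (Rabs c) (pow alpha j)).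
  move=> j Hj; have [_ I2 _ _] := inv j (ltnW Hj).
  have [_ H] := HFS n s Hs (Es j) (symdiff (vs j) (Bs j)).
  rewrite I2 in H; rewrite /cost.
  have := Rle_abs c; have : Rle 0 (pow alpha j) by apply: pow_le; lra.
  nra.
have Hm : (m <= #|Rm|)%N.
  have [_ I2 I3 _] := inv m (leqnn m); rewrite -{1}I2; exact: subset_leq_card.
have Hc0 := Rabs_pos c.
have Hpart : forall k, (k <= m)%N ->
   Rle (Rmult (INR (k.+1 + \sum_(j < k) cost j)%N) (Rminus alpha 1))
       (Rmult (Rplus 1 (Rabs c)) (Rminus (pow alpha k.+1) 1)).
  elim=> [|k IH] Hk.
    rewrite big_ord0 /=; nra.
  have IH' := IH (ltnW Hk).
  rewrite big_ord_recr.
  have Hck := Hcost k Hk.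
  have Ha : Rle 1 (pow alpha k) by apply: pow_R1_Rle; lra.
  have E1 : pow alpha k.+1 = Rmult alpha (pow alpha k) by [].
  have E2 : pow alpha k.+2 = Rmult alpha (Rmult alpha (pow alpha k)) by [].
  rewrite E2; rewrite E1 in IH'.
  rewrite !INR_addn !S_INR in IH' *.
  set P := pow alpha k in Ha Hck IH' *.
  set X := INR (\sum_(i < k) cost i) in IH' *.
  set Y := INR (cost k) in Hck *.
  have H3 : Rle (Rmult (Rplus 1 Y) (Rminus alpha 1)) (Rmult (Rmult (Rplus 1 (Rabs c)) (Rmult alpha P)) (Rminus alpha 1)).
    apply: Rmult_le_compat_r; first lra.
    have : Rle P (Rmult alpha P) by nra.
    nra.
  nra.
have HP := Hpart m (leqnn m). rewrite /cost in HP.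
rewrite /alg1_cost.
have Hpow : Rle (pow alpha m) (pow alpha #|Rm|) by apply: Rle_pow; [lra | apply/leP].
have Hpos : Rlt 0 (Rminus alpha 1) by lra.
apply: (Rmult_le_reg_r (Rminus alpha 1)) => //.
have -> : Rmult (Rmult (Rdiv (Rmult (Rplus 1 (Rabs c)) alpha) (Rminus alpha 1)) (pow alpha #|Rm|)) (Rminus alpha 1)
   = Rmult (Rplus 1 (Rabs c)) (Rmult alpha (pow alpha #|Rm|)).
  field; lra.
have E1 : pow alpha m.+1 = Rmult alpha (pow alpha m) by [].
rewrite E1 in HP.
have : Rle (Rmult alpha (pow alpha m)) (Rmult alpha (pow alpha #|Rm|)) by apply: Rmult_le_compat_l; lra.
move=> H4.
have H5 : Rle (Rmult (Rplus 1 (Rabs c)) (Rminus (Rmult alpha (pow alpha m)) 1)) (Rmult (Rplus 1 (Rabs c)) (Rmult alpha (pow alpha #|Rm|))) by apply: Rmult_le_compat_l; lra.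
lra.
Qed.

End Main.

Theorem theorem19 (alpha c : R) (FS : sink_finder_type)
  (Halpha : (1 < alpha < golden_ratio)%R)
  (HFS : sink_finder_spec c alpha FS) :
  exists C : R,
    forall (n : nat) (s : {set 'I_n} -> {set 'I_n}), is_uso s ->
    forall (v0 : {set 'I_n}) (m : nat) (vs Es Bs : nat -> {set 'I_n}),
      alg1_run s FS v0 m vs Es Bs ->
      (INR (alg1_cost s FS m vs Es Bs) <= C * alpha ^ #|reachmap s v0|)%R.
Proof.
case: Halpha => Ha1 _; exact: main_bound Ha1 HFS.
Qed.
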